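(* Let $\ell\ge2$, $n\ge1$ and $N=\lfloor n/\ell\rfloor$. Let $\tilde e_j$ ($0\le j\le\ell-1$) be the Misra–Miwa Kashiwara operators on partitions and $\varepsilon_j(\mu)=\max\{k\ge0:\tilde e_j^{\,k}\mu\neq0\}$. (1) If $n\not\equiv0\pmod\ell$, then for $0\le i\le N$: $\tilde e_j(\mu_i^{(n)})=0$ if $j\not\equiv n-1\pmod\ell$, and $\tilde e_j(\mu_i^{(n)})=\mu_i^{(n-1)}$ if $j\equiv n-1\pmod\ell$. (2) If $n\equiv0\pmod\ell$, then for $1\le i\le N$: $\tilde e_j(\mu_i^{(n)})=0$ if $j\not\equiv n-1$, and $\tilde e_j(\mu_i^{(n)})=\mu_{i-1}^{(n-1)}$ if $j\equiv n-1\pmod\ell$; and $\tilde e_j(\mu_0^{(n)})=0$ for all $0\le j\le\ell-1$. (3) For $1\le i\le N$, $\varepsilon_j(\mu_i^{(n)})=1$ if $j\equiv n-1\pmod\ell$ and $0$ otherwise; and $\varepsilon_j(\mu_0^{(n)})=1$ if $j\equiv n-1\pmod\ell$ and $n\not\equiv0\pmod\ell$, and $0$ otherwise.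
   Context: Partitions $\mu_i^{(k)}$ for $k\ge1$, $N_k=\lfloor k/\ell\rfloor$: $\mu_0^{(k)}=(k)$; for $1\le i\le N_k$, with $a=(\ell-1)+(N_k-i)\ell$, $m=k-a=b(\ell-1)+c$, $0\le c<\ell-1$, $\mu_i^{(k)}=(a,(\ell-1)^b,c)$ (omit $c$ if $0$). The box in row $a$, column $b$ of a Young diagram has $\ell$-residue $b-a\bmod\ell$. A box is removable (resp. addable) for $\lambda$ if removing it from (resp. adding it to) $\lambda$ gives a partition; it is $i$-removable/$i$-addable if its residue is $i$. Reading the $i$-addable and $i$-removable boxes of $\lambda$ from the bottom row up gives a word in $A$ (addable) and $R$ (removable); delete occurrences of $AR$ repeatedly until none remain. If an $R$ remains, the $i$-good box is the removable box corresponding to the rightmost remaining $R$, and $\tilde e_i\lambda=\lambda$ minus that box; otherwise $\tilde e_i\lambda=0$. *)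

(* Defs.v *)
From mathcomp Require Import all_boot.
Set Implicit Arguments. Unset Strict Implicit. Unset Printing Implicit Defensive.

(* Partitions are represented as weakly decreasing sequences of positive
   naturals [lambda_1; lambda_2; ...]; the empty partition is [::].
   Rows and columns are numbered from 1. *)

(* l-residue of the box in row r, column c : (c - r) mod l *)
Definition residue (l r c : nat) : nat := (c + l * r - r) %% l.

Definition mu (l k i : nat) : seq nat :=
  if i == 0 then (if k == 0 then [::] else [:: k])
  else
    let a := (l - 1) + (k %/ l - i) * l in
    let m := k - a in
    let b := m %/ (l - 1) in
    let c := m %% (l - 1) in
    a :: nseq b (l - 1) ++ (if c == 0 then [::] else [:: c]).

(* Letters: (true, r) = R (removable box in row r), (false, r) = A
   (addable box in row r). *)

Definition rem_letter (l i : nat) (lam : seq nat) (r : nat) : seq (bool * nat) :=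
  if (r <= size lam) && (nth 0 lam r < nth 0 lam r.-1)
     && (residue l r (nth 0 lam r.-1) == i)
  then [:: (true, r)] else [::].

Definition add_letter (l i : nat) (lam : seq nat) (r : nat) : seq (bool * nat) :=
  if (0 < r) && (r <= (size lam).+1)
     && ((r == 1) || (nth 0 lam r.-1 < nth 0 lam r.-2))
     && (residue l r (nth 0 lam r.-1).+1 == i)
  then [:: (false, r)] else [::].

Definition signature (l i : nat) (lam : seq nat) : seq (bool * nat) :=
  flatten [seq add_letter l i lam r ++ rem_letter l i lam r
          | r <- rev (iota 1 (size lam).+1)].

Fixpoint del_AR (w : seq (bool * nat)) : seq (bool * nat) :=
  match w with
  | [::] => [::]
  | x :: t =>
      match x, t with
      | (false, _), (true, _) :: t' => t'
      | _, _ => x :: del_AR t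
      end
  end.

Definition reduce_word (w : seq (bool * nat)) : seq (bool * nat) :=
  iter (size w) del_AR w.

Definition good_row (l i : nat) (lam : seq nat) : option nat :=
  let rs := [seq p.2 | p <- reduce_word (signature l i lam) & p.1] in
  if rs is [::] then None else Some (last 0 rs).

Definition remove_box (lam : seq nat) (r : nat) : seq nat :=
  [seq x <- set_nth 0 lam r.-1 (nth 0 lam r.-1).-1 | x != 0].

(* Kashiwara operator e~_i ; None stands for 0 *)
Definition e_tilde (l i : nat) (lam : seq nat) : option (seq nat) :=
  match good_row l i lam with
  | None => None
  | Some r => Some (remove_box lam r)
  end.

Definition e_iter (l i k : nat) (lam : seq nat) : option (seq nat) :=
  iter k (fun o => obind (e_tilde l i) o) (Some lam).

(* epsilon_i(lam) = max {k >= 0 : e~_i^k lam <> 0}; since each application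
   removes a box, k ranges over 0 .. |lam|. *)
Definition eps (l i : nat) (lam : seq nat) : nat :=
  \max_(k < (sumn lam).+1 | e_iter l i k lam != None) k.

(* Main.v *)
Require Import Defs.
From mathcomp Require Import all_boot zify.

Lemma mod_neq l X Y k : 0 < k < l -> (exists p q, X + k + l*p = Y + l*q) -> X %% l <> Y %% l.
Proof.
move=> /andP[k0 kl] [p [q E]] H.
have : (X + k) %% l = X %% l.
  have e1 : (X + k) %% l = (X + k + l*p) %% l by rewrite [_ + l*p]addnC [l*p]mulnC modnMDl.
  have e2 : Y %% l = (Y + l*q) %% l by rewrite [_ + l*q]addnC [l*q]mulnC modnMDl.
  by rewrite e1 E -e2 H.
move/eqP; rewrite -{2}(addn0 X) eqn_modDl mod0n modn_small //; lia.
Qed.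

Lemma mod_eq l X Y : (exists p q, X + l*p = Y + l*q) -> X %% l = Y %% l.
Proof. move=> [p [q E]].
  have e1 : X %% l = (X + l*p) %% l by rewrite [_ + l*p]addnC [l*p]mulnC modnMDl.
  have e2 : Y %% l = (Y + l*q) %% l by rewrite [_ + l*q]addnC [l*q]mulnC modnMDl.
  by rewrite e1 E -e2. Qed.

Lemma mod_val l X Y : Y < l -> (exists p q, X + l*p = Y + l*q) -> X %% l = Y.
Proof. by move=> hy h; rewrite (@mod_eq l X Y h) modn_small. Qed.

Ltac try_q := first [exists 0; lia | exists 1; lia | exists 2; lia | exists 3; lia | exists 4; lia].
Ltac try_pq := first [exists 0; try_q | exists 1; try_q | exists 2; try_q | exists 3; try_q | exists 4; try_q].
Ltac rneq kk := rewrite /residue; apply: (@mod_neq _ _ _ kk); [lia | try_pq].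
Ltac req := rewrite /residue; apply: mod_eq; try_pq.

Lemma res_a1 d q : residue d.+1 1 (d + q * d.+1).+1 = d.
Proof. rewrite /residue; apply: mod_val => //; exists 0, (q.+1); lia. Qed.
Lemma res_a d q : 1 <= d -> residue d.+1 1 (d + q * d.+1) = d.-1.
Proof. move=> hd; rewrite /residue; apply: mod_val; first lia. exists 0, (q.+1); lia. Qed.
Lemma res_col1 d r : 1 <= d -> residue d.+1 r 1 = residue d.+1 r 1.
Proof. by []. Qed.

Ltac split_j j := repeat match goal with |- context [?x == j] => case: (eqVneq x j) => ? end.

Lemma shapeT3 d q c j (hd : 1 <= d) (hc0 : 0 < c) (hc : c < d) :
  good_row d.+1 j [:: d + q * d.+1; c] = if j == residue d.+1 2 c then Some 2 else None.
Proof.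
rewrite /good_row /signature /= /add_letter /rem_letter /= hc0.
have -> : c < d + q * d.+1 by lia.
rewrite res_a1 res_a //.
have -> : residue d.+1 3 1 = d.-1.
  rewrite /residue; apply: mod_val; [lia|try_pq].
have n1 : residue d.+1 2 c <> residue d.+1 2 c.+1 by rneq 1.
have n2 : residue d.+1 2 c <> d.-1.
  rewrite -(@modn_small d.-1 d.+1); last lia. rneq (d.+1 - c).
rewrite [j == _]eq_sym /=.
split_j j; rewrite /reduce_word /=; try congruence; lia.
Qed.

Lemma res_2l d : 1 <= d -> residue d.+1 2 d.+1 = d.-1.
Proof. move=> hd; rewrite /residue; apply: mod_val; [lia|try_pq]. Qed.

Lemma shapeT2 d q c j (hd : 1 <= d) (hc0 : 0 < c) (hc : c < d) :
  good_row d.+1 j [:: d + q * d.+1; d; c] = if j == residue d.+1 3 c then Some 3 else None.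
Proof.
rewrite /good_row /signature /= /add_letter /rem_letter /= hc0 hc.
rewrite res_a1 res_a // res_2l //.
have -> : residue d.+1 2 d = residue d.+1 4 1 by req.
have n1 : residue d.+1 3 c <> residue d.+1 3 c.+1 by rneq 1.
have n2 : residue d.+1 4 1 <> residue d.+1 3 c by rneq c.
rewrite [j == _]eq_sym /=.
case: (d < d + q * d.+1); rewrite /=;
split_j j; rewrite /reduce_word /=; try congruence; lia.
Qed.

Lemma shapeU2 d q j (hd : 1 <= d) :
  good_row d.+1 j [:: d + q * d.+1; d] = if j == residue d.+1 2 d then Some 2 else None.
Proof.
rewrite /good_row /signature /= /add_letter /rem_letter /= hd.
rewrite res_a1 res_a // res_2l //.
have -> : residue d.+1 3 1 = d.-1 by rewrite /residue; apply: mod_val; [lia|try_pq].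
have n1 : residue d.+1 2 d <> d.-1.
  rewrite -(@modn_small d.-1 d.+1); last lia. rneq 1.
rewrite [j == _]eq_sym /=.
case: (d < d + q * d.+1); rewrite /=;
split_j j; rewrite /reduce_word /=; try congruence; lia.
Qed.

Lemma rev_iota_split b s : rev (iota 1 (b + s).+3) = rev (iota b.+3 s.+1) ++ rev (iota 3 b) ++ [:: 2; 1].
Proof.
have -> : (b + s).+3 = 2 + (b + s.+1) by lia.
rewrite iotaD iotaD rev_cat rev_cat /= catA.
by rewrite (_ : 3 + b = b.+3) //; lia.
Qed.

Lemma flatten_nil (T : eqType) (U : Type) (f : T -> seq U) (s : seq T) :
  (forall x, x \in s -> f x = [::]) -> flatten (map f s) = [::].
Proof.
elim: s => //= x s IH H; rewrite H ?mem_head // IH // => y hy; apply: H; by rewrite inE hy orbT.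
Qed.

Lemma nthL_mid (a d b : nat) (t : seq nat) k : 1 <= k <= b.+2 ->
  nth 0 (a :: d :: (nseq b d ++ d :: t)) k = d.
Proof.
case: k => [|[|k]] //= hk.
rewrite nth_cat size_nseq; case: ltnP => h; first by rewrite nth_nseq h.
by have -> : k - b = 0 by lia.
Qed.

Lemma nth_tail0 (T : Type) (x0 x : T) b s : nth x0 (nseq b x ++ s) b = nth x0 s 0.
Proof. by rewrite nth_cat size_nseq ltnn subnn. Qed.
Lemma nth_tail1 (T : Type) (x0 x : T) b s : nth x0 (nseq b x ++ s) b.+1 = nth x0 s 1.
Proof. by rewrite nth_cat size_nseq ltnNge leqnSn /= subSn // subnn. Qed.
Lemma nth_tail2 (T : Type) (x0 x : T) b s : nth x0 (nseq b x ++ s) b.+2 = nth x0 s 2.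
Proof. rewrite nth_cat size_nseq ltnNge (_ : b <= b.+2) /=; last lia. by rewrite (_ : b.+2 - b = 2) //; lia. Qed.
Lemma nth_head (T : Type) (x0 x : T) b s : nth x0 (nseq b x ++ x :: s) 0 = x.
Proof. by case: b. Qed.

Lemma sig_mid l j (a d b : nat) (t : seq nat) :
  flatten [seq add_letter l j (a :: d :: (nseq b d ++ d :: t)) r ++ rem_letter l j (a :: d :: (nseq b d ++ d :: t)) r | r <- rev (iota 3 b)] = [::].
Proof.
apply: flatten_nil => r; rewrite mem_rev mem_iota => hr.
have h1 := (@nthL_mid a d b t r.-1); have h2 := (@nthL_mid a d b t r.-2); have h3 := (@nthL_mid a d b t r).
rewrite /add_letter /rem_letter h1 ?h2 ?h3; try lia.
by rewrite ltnn !andbF /= (_ : (r == 1) = false) ?andbF //; lia.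
Qed.


Lemma nth_d (d b : nat) s : nth 0 (d :: nseq b d ++ s) b = d.
Proof. change (nth 0 (nseq b.+1 d ++ s) b = d). by rewrite nth_cat size_nseq ltnSn nth_nseq ltnSn. Qed.

Ltac dec_lt := repeat match goal with |- context [?x < ?y] =>
  (rewrite (_ : (x < y) = true); last by lia) ||
  (rewrite (_ : (x < y) = false); last by apply/negbTE; lia) end.

Lemma shapeT1 d q b c j (hd : 1 <= d) (hc0 : 0 < c) (hc : c < d) :
  good_row d.+1 j (d + q * d.+1 :: d :: (nseq b d ++ [:: d; c])) = if j == residue d.+1 b.+4 c then Some b.+4 else None.
Proof.
rewrite /good_row /signature.
have -> : (size (d + q * d.+1 :: d :: (nseq b d ++ [:: d; c]))).+1 = (b + 2).+3 by rewrite /= size_cat size_nseq /=; lia.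
rewrite rev_iota_split map_cat flatten_cat map_cat flatten_cat sig_mid /=.
rewrite /add_letter /rem_letter /= !nth_tail0 !nth_tail1 !nth_tail2 !nth_head /= ?nth_d /= size_cat size_nseq /=.
dec_lt => /=.
rewrite res_a1 res_a // res_2l //.
have -> : residue d.+1 b.+3 d = residue d.+1 b.+1.+4 1 by req.
have n1 : residue d.+1 b.+4 c <> residue d.+1 b.+4 c.+1 by rneq 1.
have n2 : residue d.+1 b.+1.+4 1 <> residue d.+1 b.+4 c by rneq c.
rewrite [j == _]eq_sym /=.
case: (d < d + q * d.+1); rewrite /=;
split_j j; rewrite /reduce_word /=; try congruence; lia.
Qed.

Lemma shapeU1 d q b j (hd : 1 <= d) :
  good_row d.+1 j (d + q * d.+1 :: d :: (nseq b d ++ [:: d])) = if j == residue d.+1 b.+3 d then Some b.+3 else None.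
Proof.
rewrite /good_row /signature.
have -> : (size (d + q * d.+1 :: d :: (nseq b d ++ [:: d]))).+1 = (b + 1).+3 by rewrite /= size_cat size_nseq /=; lia.
rewrite rev_iota_split map_cat flatten_cat map_cat flatten_cat sig_mid /=.
rewrite /add_letter /rem_letter /= !nth_tail0 !nth_tail1 !nth_tail2 !nth_head /= ?nth_d /= size_cat size_nseq /=.
dec_lt => /=.
rewrite res_a1 res_a // res_2l //.
have n1 : residue d.+1 b.+3 d <> residue d.+1 b.+4 1 by rneq 1.
rewrite [j == _]eq_sym /=.
case: (d < d + q * d.+1); rewrite /=;
split_j j; rewrite /reduce_word /=; try congruence; lia.
Qed.

Lemma shapeS0 d n j (hd : 1 <= d) (hn : 0 < n) :
  good_row d.+1 j [:: n] = if j == residue d.+1 1 n then (if residue d.+1 1 n == d then None else Some 1) else None.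
Proof.
rewrite /good_row /signature /= /add_letter /rem_letter /= hn.
have -> : residue d.+1 2 1 = d by rewrite /residue; apply: mod_val; [lia|try_pq].
have n1 : residue d.+1 1 n <> residue d.+1 1 n.+1 by rneq 1.
rewrite [j == _]eq_sym /=.
split_j j; rewrite /reduce_word /=; try congruence; try lia;
repeat match goal with |- context [?x == ?y] => case: (eqVneq x y) => ? end; rewrite /=; try congruence; lia.
Qed.

Definition mkrest (d m : nat) : seq nat :=
  nseq (m %/ d) d ++ (if m %% d == 0 then [::] else [:: m %% d]).

Lemma nseqS_cat (T : Type) (x : T) b t : nseq b.+1 x ++ t = nseq b x ++ x :: t.
Proof. by elim: b => //= b ->. Qed.

Lemma good_gen d q m j (hd : 1 <= d) (hm : 0 < m) :
  good_row d.+1 j (d + q * d.+1 :: mkrest d m) =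
  if j == (d + q * d.+1 + m - 1) %% d.+1 then Some (size (d + q * d.+1 :: mkrest d m)) else None.
Proof.
rewrite /mkrest.
have hmd := divn_eq m d; have hc := @ltn_pmod m d hd.
move: hmd hc; set b := m %/ d; set c := m %% d => hmd hc.
case: b hmd => [|[|b]] hmd; case: eqP => hc0 /=.
- lia.
- rewrite shapeT3; try lia. congr (if _ then _ else _); congr (_ == _).
  rewrite /residue; apply: mod_eq; exists q, 1; lia.
- rewrite shapeU2 //. congr (if _ then _ else _); congr (_ == _).
  rewrite /residue; apply: mod_eq; exists q, 1; lia.
- rewrite shapeT2; try lia. congr (if _ then _ else _); congr (_ == _).
  rewrite /residue; apply: mod_eq; exists q, 1; lia.
- have E := nseqS_cat _ d b [::]; simpl in E; rewrite E shapeU1 // ?size_cat ?size_nseq /=.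
  rewrite (_ : (b + 0).+3 = b.+3); last lia.
  congr (if _ then _ else _); congr (_ == _).
  rewrite /residue; apply: mod_eq; exists q, 1; lia.
- have E := nseqS_cat _ d b [:: c]; simpl in E; rewrite E shapeT1 //; try lia; rewrite ?size_cat ?size_nseq /=.
  rewrite (_ : (b + 1).+3 = b.+4); last lia.
  congr (if _ then _ else _); congr (_ == _).
  rewrite /residue; apply: mod_eq; exists q, 1; lia.
Qed.

Lemma set_nth_last (s : seq nat) x y : set_nth 0 (s ++ [:: x]) (size s) y = s ++ [:: y].
Proof. by elim: s => //= z s ->. Qed.

Lemma nth_last0 (s : seq nat) x : nth 0 (s ++ [:: x]) (size s) = x.
Proof. by rewrite nth_cat ltnn subnn. Qed.

Lemma RB a (s : seq nat) x : a != 0 ->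
  remove_box (a :: s ++ [:: x]) (size s).+2 = a :: [seq y <- s | y != 0] ++ (if x.-1 == 0 then [::] else [:: x.-1]).
Proof.
move=> ha; rewrite /remove_box /= nth_last0 set_nth_last /= ha filter_cat /=.
by case: (x.-1 == 0).
Qed.

Lemma rb_gen d a m (hd : 1 <= d) (ha : 0 < a) (hm : 0 < m) :
  remove_box (a :: mkrest d m) (size (a :: mkrest d m)) = a :: mkrest d m.-1.
Proof.
rewrite /mkrest.
have hmd := divn_eq m d; have hc := @ltn_pmod m d hd.
move: hmd hc; set b := m %/ d; set c := m %% d => hmd hc.
have ha' : a != 0 by lia.
case: eqP => hc0.
- case: b hmd => [|b] hmd; first lia.
  rewrite nseqS_cat.
  have -> : size (a :: nseq b d ++ [:: d]) = (size (nseq b d)).+2 by rewrite /= size_cat /= addn1.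
  rewrite RB // filter_nseq /= (_ : (d != 0) = true) ?mul1n; last lia.
  have hm1 : m.-1 = b * d + d.-1 by rewrite hmd hc0; lia.
  rewrite hm1 divnMDl // modnMDl divn_small ?modn_small; try lia.
  by rewrite addn0.
- have -> : size (a :: nseq b d ++ [:: c]) = (size (nseq b d)).+2 by rewrite /= size_cat /= addn1.
  rewrite RB // filter_nseq /= (_ : (d != 0) = true) ?mul1n; last lia.
  have hm1 : m.-1 = b * d + c.-1 by rewrite hmd; lia.
  rewrite hm1 divnMDl // modnMDl divn_small ?modn_small; try lia.
  by rewrite addn0.
Qed.

Lemma mu_pos d k i : i != 0 ->
  mu d.+1 k i = (d + (k %/ d.+1 - i) * d.+1) :: mkrest d (k - (d + (k %/ d.+1 - i) * d.+1)).
Proof. move=> hi; rewrite /mu (negbTE hi) /mkrest subn1 /=. by []. Qed.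

Lemma key_pos d n i j (hd : 1 <= d) (hi1 : 1 <= i) (hi : i <= n %/ d.+1) :
  e_tilde d.+1 j (mu d.+1 n i) =
  if j == (n - 1) %% d.+1 then Some (mu d.+1 (n - 1) (if n %% d.+1 == 0 then i.-1 else i)) else None.
Proof.
rewrite mu_pos; last lia.
have hdiv := divn_eq n d.+1; have hr := @ltn_pmod n d.+1 (ltn0Sn d).
move: hi hdiv hr. set N := n %/ d.+1. set r := n %% d.+1. move=> hi hdiv hr.
have hq : (N - i) + i = N by lia.
move: hq; set q := N - i => hq.
have hN' : N * d.+1 = q * d.+1 + i * d.+1 by rewrite -mulnDl hq.
have hi' : d.+1 <= i * d.+1 by rewrite leq_pmull.
clearbody q N r.
set a := d + q * d.+1.
have hm : 0 < n - a by rewrite /a; lia.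
rewrite /e_tilde good_gen //.
rewrite (_ : d + q * d.+1 + (n - a) - 1 = n - 1); last by rewrite /a; lia.
case: (j == _) => //. congr Some.
rewrite rb_gen //; last by rewrite /a; lia.
case: N hi hdiv hN' hq => [|N] hi hdiv hN' hq; first lia.
case: eqP => hr0.
- have [hi1'|hi2] := eqVneq i 1.
  + subst i. rewrite /mu /=.
    have -> : (n - 1 == 0) = false by apply/negbTE; lia.
    have -> : (n - a).-1 = 0 by rewrite /a; lia.
    rewrite /mkrest div0n mod0n /=. congr (_ :: _). rewrite /a; lia.
  + rewrite mu_pos; last lia.
    have -> : (n - 1) %/ d.+1 = N.
      rewrite (_ : n - 1 = N * d.+1 + d); last lia.
      by rewrite divnMDl // divn_small // addn0.
    rewrite (_ : N - i.-1 = q); last lia.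
    congr (_ :: mkrest d _). rewrite /a; lia.
- rewrite mu_pos; last lia.
  have -> : (n - 1) %/ d.+1 = N.+1.
    rewrite (_ : n - 1 = N.+1 * d.+1 + r.-1); last lia.
    rewrite divnMDl // divn_small ?addn0 //; lia.
  rewrite (_ : N.+1 - i = q); last lia.
  congr (_ :: mkrest d _). rewrite /a; lia.
Qed.

Lemma modpred d n : 0 < n -> ((n - 1) %% d.+1 == d) = (n %% d.+1 == 0).
Proof.
move=> hn; have hx : n = (n - 1).+1 by lia.
move: (n - 1) hx => x ->.
have hlt := @ltn_pmod x d.+1 (ltn0Sn d).
have e : (x %% d.+1 + 1) %% d.+1 = x.+1 %% d.+1 by rewrite modnDml addn1.
case: (ltngtP (x %% d.+1) d) => h.
- rewrite -e modn_small; lia.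
- lia.
- by rewrite -e h addn1 modnn eqxx.
Qed.

Lemma key0 d n j (hd : 1 <= d) (hn : 1 <= n) :
  e_tilde d.+1 j (mu d.+1 n 0) =
  if (j == (n - 1) %% d.+1) && (n %% d.+1 != 0) then Some (mu d.+1 (n - 1) 0) else None.
Proof.
have -> : mu d.+1 n 0 = [:: n] by rewrite /mu /= (_ : (n == 0) = false) //; lia.
rewrite /e_tilde shapeS0 //.
have hres : residue d.+1 1 n = (n - 1) %% d.+1 by rewrite /residue; apply: mod_eq; exists 0, 1; lia.
rewrite hres modpred //.
case: (j == _) => //=. case: (n %% d.+1 == 0) => //=.
rewrite /remove_box /mu /=. case: n hn hres => [|[|n]] //=.
Qed.

Lemma e_iter_none l j m k lam : e_iter l j m lam = None -> e_iter l j (m + k) lam = None.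
Proof. move=> h; elim: k => [|k IH]; first by rewrite addn0. by rewrite addnS /e_iter iterS -/(e_iter l j (m + k) lam) IH. Qed.

Lemma eps0 l j lam : e_tilde l j lam = None -> eps l j lam = 0.
Proof.
move=> h; apply/eqP; rewrite -leqn0; apply/bigmax_leqP => k hk.
case: k hk => [[|k] hk] // /negP []; apply/eqP.
exact: (@e_iter_none l j 1 k lam h).
Qed.

Lemma eps1 l j lam mu' : e_tilde l j lam = Some mu' -> e_tilde l j mu' = None -> 0 < sumn lam -> eps l j lam = 1.
Proof.
move=> h1 h2 hs.
have e2 : e_iter l j 2 lam = None by rewrite /e_iter /= h1 /= h2.
apply/eqP; rewrite eqn_leq; apply/andP; split.
- apply/bigmax_leqP => k hk.
  case: k hk => [[|[|k]] hk] // /negP []; apply/eqP.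
  exact: (@e_iter_none l j 2 k lam e2).
- have hlt : 1 < (sumn lam).+1 by [].
  apply: (@leq_bigmax_cond _ _ (fun k : 'I_(sumn lam).+1 => val k) (Ordinal hlt)).
  by rewrite /= /e_iter /= h1.
Qed.

Lemma e_nil l j : e_tilde l j [::] = None.
Proof. rewrite /e_tilde /good_row /signature /= /add_letter /rem_letter /=. by case: (_ == j). Qed.

Lemma divpred d n : 0 < n -> (n - 1) %/ d.+1 = if n %% d.+1 == 0 then (n %/ d.+1).-1 else n %/ d.+1.
Proof.
move=> hn.
have hdiv := divn_eq n d.+1; have hr := @ltn_pmod n d.+1 (ltn0Sn d).
move: hdiv hr. set N := n %/ d.+1. set r := n %% d.+1. move=> hdiv hr. clearbody N r.
case: eqP => hr0.
- case: N hdiv => [|N] hdiv; first lia.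
  rewrite (_ : n - 1 = N * d.+1 + d); last lia.
  by rewrite divnMDl // divn_small // addn0.
- rewrite (_ : n - 1 = N * d.+1 + r.-1); last lia.
  rewrite divnMDl // divn_small ?addn0 //; lia.
Qed.

Lemma e_none d n' i' j : 1 <= d -> 1 <= n' -> i' <= n' %/ d.+1 -> j != (n' - 1) %% d.+1 ->
  e_tilde d.+1 j (mu d.+1 n' i') = None.
Proof.
move=> hd hn hi hj.
case: i' hi => [|i'] hi; first by rewrite key0 // (negbTE hj).
by rewrite key_pos // (negbTE hj).
Qed.

Lemma predpred d n : 1 <= d -> 2 <= n -> (n - 1) %% d.+1 != (n - 1 - 1) %% d.+1.
Proof. move=> hd hn; apply/eqP => h; symmetry in h; move: h; apply: (@mod_neq _ _ _ 1); [lia | exists 0, 0; lia]. Qed.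

Theorem lemma6p8 (l n : nat) (hl : 2 <= l) (hn : 1 <= n) :
  (* (1) *)
  (n %% l != 0 ->
     forall i, i <= n %/ l -> forall j, j < l ->
       e_tilde l j (mu l n i) =
         if j == (n - 1) %% l then Some (mu l (n - 1) i) else None) /\
  (* (2) *)
  (n %% l == 0 ->
     (forall i, 1 <= i <= n %/ l -> forall j, j < l ->
        e_tilde l j (mu l n i) =
          if j == (n - 1) %% l then Some (mu l (n - 1) (i - 1)) else None) /\
     (forall j, j < l -> e_tilde l j (mu l n 0) = None)) /\
  (* (3) *)
  (forall i, 1 <= i <= n %/ l -> forall j, j < l ->
     eps l j (mu l n i) = if j == (n - 1) %% l then 1 else 0) /\
  (forall j, j < l ->
     eps l j (mu l n 0) =
       if (j == (n - 1) %% l) && (n %% l != 0) then 1 else 0).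
Proof.
case: l hl => [|d] // hl; have hd : 1 <= d by lia.
split; [|split; [|split]].
- move=> hr i hi j hj.
  case: i hi => [|i] hi; first by rewrite key0 // hr andbT.
  by rewrite key_pos // (negbTE hr).
- move=> hr; split.
  + move=> i /andP[hi1 hi] j hj. by rewrite key_pos // hr [i - 1]subn1.
  + move=> j hj. by rewrite key0 // hr andbF.
- move=> i /andP[hi1 hi] j hj.
  have hn2 : 2 <= n.
    have := leq_trans hi1 hi; rewrite divn_gt0 //; lia.
  have hsum : 0 < sumn (mu d.+1 n i).
    rewrite mu_pos /=; last lia. by rewrite -addnA (leq_trans hd (leq_addr _ _)).
  case: (eqVneq j ((n - 1) %% d.+1)) => hjr.
  + apply: (@eps1 _ _ _ (mu d.+1 (n - 1) (if n %% d.+1 == 0 then i.-1 else i))) => //.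
    * by rewrite key_pos // hjr eqxx.
    * apply: e_none => //; first lia.
      -- rewrite divpred; last lia. case: (n %% d.+1 == 0); lia.
      -- rewrite hjr; apply: predpred => //.
  + by apply: eps0; rewrite key_pos // (negbTE hjr).
- move=> j hj.
  case: (eqVneq j ((n - 1) %% d.+1)) => hjr /=; last by apply: eps0; rewrite key0 // (negbTE hjr).
  case: (eqVneq (n %% d.+1) 0) => hr0 /=.
  + by apply: eps0; rewrite key0 // hr0 andbF.
  + have hsum : 0 < sumn (mu d.+1 n 0) by rewrite /mu (_ : (n == 0) = false) /=; lia.
    apply: (@eps1 _ _ _ (mu d.+1 (n - 1) 0)) => //.
    * by rewrite key0 // hjr eqxx hr0.
    * case: (n - 1 =P 0) => hn1.
      -- by rewrite hn1 /mu /= e_nil.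
      -- apply: e_none => //; first lia.
         rewrite hjr; apply: predpred; lia.
Qed.
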